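(* Let $A,B\subset\mathbb{R}^n$ be set-germs at $0$ with $0\in\overline{A}\cap\overline{B}$, and let $h:(\mathbb{R}^n,0)\to(\mathbb{R}^n,0)$ be a bi-Lipschitz homeomorphism (germ). Suppose that $B$ satisfies condition $(SSP)$. If $D(A)\subset D(B)$, then $D(h(A))\subset D(h(B))$.
   Context: A bi-Lipschitz homeomorphism germ is a homeomorphism between neighbourhoods of $0$ fixing $0$ with $K_1|x-y|\le|h(x)-h(y)|\le K_2|x-y|$ for some $0<K_1\le K_2$ near $0$. Direction set: $D(A)=\{a\in S^{n-1} : \exists\, \{x_i\}\subset A\setminus\{0\},\ x_i\to 0,\ x_i/\|x_i\|\to a\}$. A set-germ $B$ with $0\in\overline{B}$ satisfies condition $(SSP)$ if for every sequence $\{a_m\}\subset\mathbb{R}^n$ with $a_m\to0$ and $\lim a_m/\|a_m\|\in D(B)$ there is a sequence $\{b_m\}\subset B$ with $\|a_m-b_m\|/\|a_m\|\to0$ and $\|a_m-b_m\|/\|b_m\|\to0$. *)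

(* Defs.v *)
From mathcomp Require Import all_boot all_order all_algebra.
From mathcomp Require Import reals.
From mathcomp Require Import classical_sets.
Set Implicit Arguments. Unset Strict Implicit. Unset Printing Implicit Defensive.
Import Order.TTheory GRing.Theory Num.Theory.
Local Open Scope ring_scope.
Local Open Scope classical_set_scope.

Section Defs.
Variables (R : realType) (n : nat).
Local Notation V := 'rV[R]_n.

Definition enorm (x : V) : R := Num.sqrt (\sum_(i < n) (x ord0 i) ^+ 2).

Definition vcvg (u : nat -> V) (l : V) : Prop :=
  forall e : R, 0 < e -> exists N : nat, forall m, (N <= m)%N -> enorm (u m - l) < e.

Definition in_closure0 (A : set V) : Prop :=
  forall e : R, 0 < e -> exists x, A x /\ enorm x < e.

Definition dirset (A : set V) : set V :=
  [set a | enorm a = 1 /\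
     exists x : nat -> V, (forall i, A (x i) /\ x i != 0) /\ vcvg x 0 /\
       vcvg (fun i => (enorm (x i))^-1 *: x i) a].

(* condition (SSP); the ratio conditions ||a_m-b_m||/||a_m|| -> 0 and
   ||a_m-b_m||/||b_m|| -> 0 are written as: for every e > 0, eventually
   ||a_m-b_m|| <= e ||a_m|| and ||a_m-b_m|| <= e ||b_m||. *)
Definition SSP (B : set V) : Prop :=
  forall (a : nat -> V) (d : V),
    (forall m, a m != 0) -> vcvg a 0 ->
    vcvg (fun m => (enorm (a m))^-1 *: a m) d -> dirset B d ->
    exists b : nat -> V, (forall m, B (b m)) /\
      forall e : R, 0 < e -> exists N : nat, forall m, (N <= m)%N ->
        enorm (a m - b m) <= e * enorm (a m) /\
        enorm (a m - b m) <= e * enorm (b m).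

Definition open_set (U : set V) : Prop :=
  forall x, U x -> exists r : R, 0 < r /\ forall y, enorm (y - x) < r -> U y.

Definition homeo_on (U : set V) (h : V -> V) : Prop :=
  open_set U /\ open_set (h @` U) /\
  {in U &, injective h} /\
  (forall x, U x -> forall e : R, 0 < e -> exists d : R, 0 < d /\
     forall y, U y -> enorm (y - x) < d -> enorm (h y - h x) < e) /\
  (forall x, U x -> forall e : R, 0 < e -> exists d : R, 0 < d /\
     forall y, U y -> enorm (h y - h x) < d -> enorm (y - x) < e).

Definition biLipschitz_germ (U : set V) (h : V -> V) : Prop :=
  U 0 /\ homeo_on U h /\ h 0 = 0 /\
  exists r K1 K2 : R, 0 < r /\ 0 < K1 /\ K1 <= K2 /\
    forall x y, enorm x < r -> enorm y < r -> U x -> U y ->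
      K1 * enorm (x - y) <= enorm (h x - h y) /\
      enorm (h x - h y) <= K2 * enorm (x - y).

End Defs.

(* Main.v *)
Require Import Defs.
From mathcomp Require Import all_boot all_order all_algebra.
From mathcomp Require Import reals classical_sets.
From mathcomp Require Import boolp topology normedtype sequences.
From mathcomp Require Import ring lra.
Import Order.TTheory GRing.Theory Num.Theory.
Import numFieldNormedType.Exports.
Set Implicit Arguments. Unset Strict Implicit. Unset Printing Implicit Defensive.
Local Open Scope ring_scope.
Local Open Scope classical_set_scope.

Lemma bw1 (R : realType) (u : nat -> R) (M : R) : (forall k, `|u k| <= M) ->
  exists phi : nat -> nat, (forall i, (phi i < phi i.+1)%N) /\ exists l : R,
   forall e, 0 < e -> exists N, forall m, (N <= m)%N -> `|u (phi m) - l| < e.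
Proof.
move=> hM.
have hb : bounded_fun u.
  exists M; split; first by rewrite num_real.
  move=> x Mx y _; apply: le_trans (hM y) _; exact: ltW.
have [f fi fc] := bolzano_weierstrass hb.
exists f; split.
  move=> i; have := fi i.+1 i; rewrite ltnn ltnNge => H; apply/negP => H2; move: H; rewrite leEnat H2 //.
exists (lim (u \o f @ \oo)) => e e0.
have := (cvgrPdist_lt _ _).1 fc e e0.
move=> [N _ HN]; exists N => m Nm; rewrite distrC; exact: HN.
Qed.
Section Norm.
Variables (R : realType) (n : nat).
Local Notation V := 'rV[R]_n.
Local Notation en := (@enorm R n).

Definition sq (x : V) : R := \sum_(i < n) (x ord0 i) ^+ 2.
Definition dot (x y : V) : R := \sum_(i < n) x ord0 i * y ord0 i.

Lemma sq_ge0 x : 0 <= sq x.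
Proof. by apply: sumr_ge0 => i _; rewrite sqr_ge0. Qed.

Lemma enorm_ge0 x : 0 <= en x.
Proof. exact: sqrtr_ge0. Qed.

Lemma enorm_sq x : en x ^+ 2 = sq x.
Proof. by rewrite /enorm sqr_sqrtr // sq_ge0. Qed.

Lemma enorm_eq0 x : en x = 0 -> x = 0.
Proof.
move=> /eqP; rewrite /enorm sqrtr_eq0 => h.
have h0 : sq x = 0 by apply/eqP; rewrite eq_le h sq_ge0.
have := psumr_eq0P (fun i _ => sqr_ge0 (x ord0 i)) h0.
move=> hi; apply/matrixP => i j; rewrite (ord1 i) mxE.
by have /eqP := hi j isT; rewrite sqrf_eq0 => /eqP.
Qed.

Lemma enorm0 : en 0 = 0.
Proof. by rewrite /enorm big1 ?sqrtr0 // => i _; rewrite mxE expr0n. Qed.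

Lemma enorm_gt0 x : x != 0 -> 0 < en x.
Proof.
move=> hx; rewrite lt_def enorm_ge0 andbT; apply/eqP => /enorm_eq0 h.
by rewrite h eqxx in hx.
Qed.

Lemma enormZ c x : en (c *: x) = `|c| * en x.
Proof.
rewrite /enorm.
have -> : \sum_(i < n) (c *: x) ord0 i ^+ 2 = c ^+ 2 * sq x.
  by rewrite /sq mulr_sumr; apply: eq_bigr => i _; rewrite mxE exprMn.
by rewrite sqrtrM ?sqr_ge0 // sqrtr_sqr.
Qed.

Lemma enormN x : en (- x) = en x.
Proof. by rewrite -scaleN1r enormZ normrN normr1 mul1r. Qed.

Lemma sqD x y : sq (x + y) = sq x + sq y + 2 * dot x y.
Proof.
rewrite /sq /dot mulr_sumr -!big_split /=; apply: eq_bigr => i _.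
rewrite mxE; ring.
Qed.

Lemma CS x y : dot x y <= en x * en y.
Proof.
set a := en x; set b := en y.
have key : 0 <= 2 * (a * b) * (a * b - dot x y).
  have : 0 <= \sum_(i < n) (b * x ord0 i - a * y ord0 i) ^+ 2
    by apply: sumr_ge0 => i _; rewrite sqr_ge0.
  have -> : \sum_(i < n) (b * x ord0 i - a * y ord0 i) ^+ 2 =
     b ^+ 2 * sq x + a ^+ 2 * sq y - 2 * (a * b) * dot x y.
    rewrite /sq /dot !mulr_sumr -big_split -sumrB /=; apply: eq_bigr => i _.
    ring.
  rewrite -!enorm_sq -/a -/b.
  by have -> : b ^+ 2 * a ^+ 2 + a ^+ 2 * b ^+ 2 - 2 * (a * b) * dot x y =
      2 * (a * b) * (a * b - dot x y) by ring.
have [ab0|ab0] := eqVneq (a * b) 0.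
  have hd : dot x y = 0.
    move: ab0 => /eqP; rewrite mulf_eq0 => /orP[] /eqP /enorm_eq0 ->;
    by rewrite /dot big1 // => i _; rewrite mxE ?mul0r ?mulr0.
  by rewrite hd ab0.
have abp : 0 < a * b by rewrite lt_def ab0 mulr_ge0 ?enorm_ge0.
rewrite -subr_ge0; move: key; rewrite pmulr_rge0 //.
by rewrite mulr_gt0.
Qed.

Lemma enormD x y : en (x + y) <= en x + en y.
Proof.
rewrite {1}/enorm -/(sq (x + y)) sqD -(@ger0_norm _ (en x + en y)); last first.
  by rewrite addr_ge0 ?enorm_ge0.
rewrite -sqrtr_sqr ler_sqrt; last by rewrite sqr_ge0.
rewrite sqrrD -!enorm_sq.
have := CS x y; lra.
Qed.

Lemma enormB x y : en (x - y) <= en x + en y.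
Proof. by rewrite -(enormN y) enormD. Qed.

Lemma enorm_rev x y : `|en x - en y| <= en (x - y).
Proof.
have h1 : en y <= en (x - y) + en x.
  by have := enormD (y - x) x; rewrite subrK -opprB enormN.
have h2 : en x <= en (x - y) + en y.
  by have := enormD (x - y) y; rewrite subrK.
rewrite ler_norml; apply/andP; split; lra.
Qed.

Lemma coord_le (x : V) (i : 'I_n) : `|x ord0 i| <= en x.
Proof.
rewrite -(sqrtr_sqr (x ord0 i)) ler_sqrt; last by rewrite sq_ge0.
by rewrite /sq (bigD1 i) //= lerDl sumr_ge0 // => j _; rewrite sqr_ge0.
Qed.

Lemma coord_small (x : V) d : 0 <= d -> (forall i : 'I_n, `|x ord0 i| <= d) ->
  en x <= n%:R * d.
Proof.
move=> d0 h; rewrite -(@ger0_norm _ (n%:R * d)) ?mulr_ge0 //.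
rewrite -sqrtr_sqr ler_sqrt ?sqr_ge0 //.
apply: (@le_trans _ _ (\sum_(i < n) d ^+ 2)).
  apply: ler_sum => i _; rewrite -real_normK ?num_real //.
  by rewrite lerXn2r ?nnegrE ?normr_ge0.
rewrite sumr_const card_ord exprMn -[d ^+ 2 *+ n]mulr_natl ler_wpM2r ?sqr_ge0 //.
by rewrite -natrX ler_nat; case: (n) => // m; rewrite (expnS _ 1) expn1 leq_pmulr.
Qed.


End Norm.

Definition incr (phi : nat -> nat) := forall i, (phi i < phi i.+1)%N.

Lemma incr_ge phi : incr phi -> forall m, (m <= phi m)%N.
Proof. move=> hp; elim=> // m ih; exact: leq_ltn_trans ih (hp m). Qed.

Lemma incr_comp phi psi : incr phi -> incr psi -> incr (phi \o psi).
Proof.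
move=> hp hq i /=.
have mono : forall a b, (a < b)%N -> (phi a < phi b)%N.
  move=> a b; elim: b => // b ih; rewrite ltnS leq_eqVlt => /orP[/eqP -> | ab].
    exact: hp.
  exact: ltn_trans (ih ab) (hp b).
exact: mono (hq i).
Qed.

Definition ccvg (R : realType) (u : nat -> R) (l : R) :=
  forall e : R, 0 < e -> exists N, forall m, (N <= m)%N -> `|u m - l| < e.

Lemma ccvg_sub (R : realType) (u : nat -> R) l phi : incr phi -> ccvg u l -> ccvg (u \o phi) l.
Proof.
move=> hp hu e e0; have [N hN] := hu e e0; exists N => m Nm.
apply: hN; exact: leq_trans Nm (incr_ge hp m).
Qed.

Lemma vcvg_sub (R : realType) n (u : nat -> 'rV[R]_n) l phi :
  incr phi -> vcvg u l -> vcvg (u \o phi) l.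
Proof.
move=> hp hu e e0; have [N hN] := hu e e0; exists N => m Nm.
apply: hN; exact: leq_trans Nm (incr_ge hp m).
Qed.

Lemma small0 (R : realType) (t : R) : (forall e : R, 0 < e -> `|t| < e) -> t = 0.
Proof.
move=> H; apply/eqP; apply: contraT => t0.
have := H `|t|; rewrite normr_gt0 t0 ltxx; by move=> /(_ isT).
Qed.

Lemma bwn (R : realType) n (u : nat -> 'rV[R]_n) : (forall k, enorm (u k) <= 1) ->
  exists phi, incr phi /\ exists l, vcvg (u \o phi) l.
Proof.
move=> hu.
have step : forall k, exists phi, incr phi /\ forall i : 'I_n, (i < k)%N ->
    exists c, ccvg (fun m => u (phi m) ord0 i) c.
  elim=> [|k [phi [hp ih]]].
    by exists id; split => // i.
  case: (ltnP k n) => hk; last first.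
    exists phi; split => // i ik; apply: ih.
    exact: leq_trans (ltn_ord i) hk.
  set i0 := Ordinal hk.
  have [psi [hq [c hc]]] := @bw1 R (fun m => u (phi m) ord0 i0) 1
     (fun m => le_trans (coord_le _ _) (hu _)).
  exists (phi \o psi); split; first exact: incr_comp.
  move=> i; rewrite ltnS leq_eqVlt => /orP[/eqP ik | ik].
    have -> : i = i0 by apply: val_inj.
    by exists c => e e0; have [N hN] := hc e e0; exists N.
  have [c' hc'] := ih i ik; exists c'.
  exact: (ccvg_sub (u := fun m => u (phi m) ord0 i)).
have [phi [hp hc]] := step n.
exists phi; split => //.
have [c hc'] := choice (fun (i : 'I_n) => hc i (ltn_ord i)).
exists (\row_i c i) => e e0.
set dl := e / (n.+1)%:R.
have dl0 : 0 < dl by rewrite divr_gt0.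
have [Nf hN] := choice (fun (i : 'I_n) => hc' i dl dl0).
exists (\max_(i < n) Nf i)%N => m hm.
apply: (@le_lt_trans _ _ (n%:R * dl)).
  apply: coord_small; first exact: ltW.
  move=> i; rewrite !mxE; apply: ltW; apply: hN.
  exact: leq_trans (leq_bigmax i) hm.
rewrite /dl mulrA ltr_pdivrMr ?ltr0Sn // [X in _ < X]mulrC ltr_pM2r // ltr_nat //.
Qed.

Lemma unit_diff (R : realType) n (X Z : 'rV[R]_n) : X != 0 -> Z != 0 ->
  enorm ((enorm Z)^-1 *: Z - (enorm X)^-1 *: X) <= 2 * enorm (Z - X) / enorm X.
Proof.
move=> hX hZ; set p := enorm Z; set q := enorm X; set D := enorm (Z - X).
have p0 : 0 < p := enorm_gt0 hZ.
have q0 : 0 < q := enorm_gt0 hX.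
have -> : p^-1 *: Z - q^-1 *: X = q^-1 *: (Z - X) + (p^-1 - q^-1) *: Z.
  by rewrite scalerBr scalerBl [RHS]addrC -addrA addKr.
apply: le_trans (enormD _ _) _; rewrite !enormZ -/p -/D.
have e1 : `|p^-1 - q^-1| * p = `|q - p| / q.
  have -> : `|p^-1 - q^-1| * p = `|(p^-1 - q^-1) * p| by rewrite normrM (ger0_norm (ltW p0)).
  have -> : (p^-1 - q^-1) * p = (q - p) / q.
    by rewrite mulrBl mulVf ?gt_eqF // mulrBl divff ?gt_eqF // mulrC.
  by rewrite normrM normfV (ger0_norm (ltW q0)).
have hq : 0 <= q^-1 by rewrite invr_ge0 ltW.
rewrite e1 (ger0_norm hq).
have hr : `|q - p| <= D by have := enorm_rev X Z; rewrite -[X - Z]opprB enormN.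
have t0 : 0 < q^-1 by rewrite invr_gt0.
move: t0 hr; set t := q^-1 => t0 hr.
have := ler_wpM2r (ltW t0) hr.
nra.
Qed.

Lemma mul_div_cancel (R : realType) (k c : R) : 0 < k -> k * (c / k) = c.
Proof. by move=> k0; rewrite mulrC divfK // gt_eqF. Qed.

Unset Implicit Arguments.

(* h(A) is the image of the germ A, i.e. of A ∩ U, where U is the domain of h. *)
Theorem proposition5p8 (R : realType) (n : nat) (A B U : set 'rV[R]_n)
    (h : 'rV[R]_n -> 'rV[R]_n) :
  in_closure0 A -> in_closure0 B ->
  biLipschitz_germ U h ->
  SSP B ->
  dirset A `<=` dirset B ->
  dirset (h @` (A `&` U)) `<=` dirset (h @` (B `&` U)).
Proof.
move=> _ _ [U0 [[Uo [_ [_ [_ hci]]]] [h0 [r [K1 [K2 [r0 [K10 [K12 hK]]]]]]]]] hSSP hAB.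
move=> d [d1 [y [hy [y0 ydir]]]].
have K20 : 0 < K2 by exact: lt_le_trans K10 K12.
have hex : forall i, exists v, (A v /\ U v) /\ h v = y i.
  by move=> i; have [[v [Av Uv] hv] _] := hy i; exists v.
have [x hx] := choice hex.
have xne : forall i, x i != 0.
  move=> i; apply/eqP => e; have := (hy i).2; by rewrite -(hx i).2 e h0 eqxx.
have xcv : vcvg x 0.
  move=> e e0; have [dl [dl0 hdl]] := hci 0 U0 e e0.
  have [N hN] := y0 dl dl0; exists N => m Nm.
  have := hdl (x m) (hx m).1.2; rewrite h0 (hx m).2 !subr0; apply.
  by move: (hN m Nm); rewrite subr0.
pose u := fun i => (enorm (x i))^-1 *: x i.
have hu1 : forall i, enorm (u i) = 1.
  move=> i; rewrite /u enormZ ger0_norm ?invr_ge0 ?enorm_ge0 //.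
  by rewrite mulVf // gt_eqF // enorm_gt0.
have hu1' : forall k, enorm (u k) <= 1 by move=> k; rewrite hu1.
have [phi [hp [a ha]]] := bwn hu1'.
have a1 : enorm a = 1.
  have : 1 - enorm a = 0.
    apply: small0 => e e0; have [N hN] := ha e e0.
    have := enorm_rev (u (phi N)) a; rewrite hu1 => H.
    exact: le_lt_trans H (hN N (leqnn N)).
  by move/eqP; rewrite subr_eq0 => /eqP <-.
have aA : dirset A a.
  split => //; exists (x \o phi); split.
    by move=> i; split; [exact: (hx _).1.1 | exact: xne].
  by split; [exact: vcvg_sub | exact: ha].
have aB := hAB a aA.
have [b [bB hb]] := hSSP (x \o phi) a (fun m => xne (phi m)) (vcvg_sub hp xcv) ha aB.
have [r1 [r10 hr1]] := Uo 0 U0.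
have h12 : (0:R) < 1/2 by lra.
have [N1 hN1] := hb (1/2) h12.
have xcvp := vcvg_sub hp xcv.
have [N2 hN2] := xcvp (r / 2) ltac:(lra).
have [N5 hN5] := xcvp (r1 / 2) ltac:(lra).
pose N0 := (N1 + N2 + N5)%N.
have key : forall m, (N0 <= m)%N -> [/\ U (b m), enorm (b m) < r, enorm (x (phi m)) < r,
    h (b m) != 0 & enorm (b m) <= 3/2 * enorm (x (phi m))].
  move=> m hm.
  have /= h1 := (hN1 m (leq_trans (leq_trans (leq_addr N2 N1) (leq_addr N5 _)) hm)).1.
  have /= h2 := hN2 m (leq_trans (leq_trans (leq_addl N1 N2) (leq_addr N5 _)) hm).
  have /= h5 := hN5 m (leq_trans (leq_addl _ N5) hm).
  rewrite subr0 in h2 h5.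
  have xp := enorm_gt0 (xne (phi m)).
  have hbx : enorm (b m) <= 3/2 * enorm (x (phi m)).
    have -> : b m = x (phi m) - (x (phi m) - b m) by rewrite opprB addrC subrK.
    have := enormB (x (phi m)) (x (phi m) - b m); lra.
  have bn : b m != 0.
    apply/eqP => e.
    rewrite e in h1.
    rewrite subr0 in h1.
    suff : (0:R) < 0 by rewrite ltxx.
    lra.
  have br : enorm (b m) < r by lra.
  have Ub : U (b m) by apply: hr1; rewrite subr0; lra.
  split => //; first by lra.
  have [hl _] := hK (b m) 0 br ltac:(by rewrite enorm0) Ub U0.
  rewrite h0 !subr0 in hl; apply/eqP => e; rewrite e enorm0 in hl.
  by have := mulr_gt0 K10 (enorm_gt0 bn); rewrite ltNge hl.
split => //; exists (fun i => h (b (N0 + i))).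
split.
  move=> i; have [Ub _ _ hn _] := key (N0 + i) (leq_addr _ _).
  by split => //; exists (b (N0 + i)).
split.
  move=> e e0.
  have [N hN] := xcvp (e / 2 / K2) ltac:(by rewrite !divr_gt0).
  exists N => m Nm.
  have [Ub br xr _ hbx] := key (N0 + m) (leq_addr _ _).
  have [_ hu] := hK (b (N0 + m)) 0 br ltac:(by rewrite enorm0) Ub U0.
  rewrite h0 !subr0 in hu; rewrite subr0; apply: le_lt_trans hu _.
  have /= hx' := hN (N0 + m) (leq_trans Nm (leq_addl _ _)); rewrite subr0 in hx'.
  have h1 : K2 * enorm (x (phi (N0 + m))) < e / 2.
    by rewrite -[e / 2](mul_div_cancel _ K20) ltr_pM2l.
  have := ler_wpM2l (ltW K20) hbx; lra.
move=> e e0.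
pose eta := e / 8 * K1 / K2.
have eta0 : 0 < eta by rewrite /eta !mulr_gt0 ?invr_gt0 // ; lra.
have [N3 hN3] := hb eta eta0.
have ydp := vcvg_sub hp ydir.
have [N4 hN4] := ydp (e / 2) ltac:(lra).
exists (N3 + N4)%N => m Nm.
set M := (N0 + m)%N.
have MN : (N3 + N4 <= M)%N by exact: leq_trans Nm (leq_addl _ _).
have [Ub br xr Zn hbx] := key M (leq_addr _ _).
have Ux := (hx (phi M)).1.2.
have Xn : y (phi M) != 0 := (hy (phi M)).2.
have [_ hZX] := hK (b M) (x (phi M)) br xr Ub Ux.
rewrite (hx (phi M)).2 -[b M - _]opprB enormN in hZX.
have /= hxb := (hN3 M (leq_trans (leq_addr _ _) MN)).1.
have [hX _] := hK (x (phi M)) 0 xr ltac:(by rewrite enorm0) Ux U0.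
rewrite h0 !subr0 (hx (phi M)).2 in hX.
have hu := unit_diff Xn Zn.
have /= hy' := hN4 M (leq_trans (leq_addl _ _) MN).
rewrite /=.
set Zd := (enorm (h (b M)))^-1 *: h (b M).
set Xd := (enorm (y (phi M)))^-1 *: y (phi M).
have -> : Zd - d = (Zd - Xd) + (Xd - d) by rewrite addrA subrK.
apply: le_lt_trans (enormD _ _) _.
have Xp := enorm_gt0 Xn.
have h2 : 2 * enorm (h (b M) - y (phi M)) / enorm (y (phi M)) <= e / 4.
  rewrite ler_pdivrMr //.
  have e1 : 2 * (K2 * (eta * enorm (x (phi M)))) = e / 4 * (K1 * enorm (x (phi M))).
    rewrite /eta; field; exact: lt0r_neq0.
  have := ler_wpM2l (ltW K20) hxb.
  have := ler_wpM2l (ltW (divr_gt0 e0 (ltr0Sn R 3))) hX.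
  lra.
lra.
Qed.
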